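(* There is an absolute constant $C>0$ such that for every integer $N\ge 2$ and every integer $h$ with $0<|h|\le 2N^2$, \[ r_N(h) \le C N^2 \sum_{\substack{d\mid h\\ 1\le d\le N}} \frac{1}{d}, \qquad\text{and}\qquad r_N(0)\le C N^2\log N. \] Moreover, for every integer $k\ge 2$ there is a constant $C_k>0$ such that $I_k(N)\le C_k N^{2k+2}$ for all integers $N\ge 2$.
   Context: For a positive integer $N$ and $h\in\mathbb{Z}$, let $r_N(h)$ be the number of tuples $(a_1,a_2,a_3,a_4)\in([-N,N]\cap\mathbb{Z})^4$ with $a_1a_2-a_3a_4=h$. For an integer $k\ge 2$, let $I_k(N)=\sum_{h\in\mathbb{Z}} r_N(h)^k$. *)

(* Defs.v *)
From Stdlib Require Import ZArith Reals List.
Import ListNotations.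
Open Scope Z_scope.

Definition box (N : Z) : list Z :=
  map (fun i => i - N) (map Z.of_nat (seq 0 (Z.to_nat (2 * N + 1)))).

Definition rN (N h : Z) : nat :=
  length (filter (fun t : Z * Z * Z * Z =>
            let '(a1, a2, a3, a4) := t in Z.eqb (a1 * a2 - a3 * a4) h)
    (list_prod (list_prod (list_prod (box N) (box N)) (box N)) (box N))).

(* I_k(N) = sum_{h in Z} r_N(h)^k.  Since |a1 a2 - a3 a4| <= 2 N^2 for all
   tuples in the box, r_N(h) = 0 outside [-2N^2, 2N^2]; for k >= 1 those
   terms vanish, so the sum over Z equals this finite sum. *)
Definition Ik (k : nat) (N : Z) : nat :=
  fold_right Nat.add 0%nat
    (map (fun h => Nat.pow (rN N h) k) (box (2 * N * N))).

Definition divsum (N h : Z) : R :=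
  fold_right Rplus 0%R
    (map (fun d => (/ IZR d)%R)
       (filter (fun d => Z.eqb (h mod d) 0)
          (map (fun i => Z.of_nat i + 1) (seq 0 (Z.to_nat N))))).

(* Main.v *)
Require Import Defs.
From Stdlib Require Import ZArith Reals List Lra Lia.
Import ListNotations.
Open Scope R_scope.


Definition Sm {A} (l : list A) (f : A -> R) : R := fold_right Rplus 0 (map f l).

Lemma Sm_nil {A} (f : A -> R) : Sm [] f = 0. Proof. reflexivity. Qed.
Lemma Sm_cons {A} (a : A) l f : Sm (a :: l) f = f a + Sm l f. Proof. reflexivity. Qed.

Lemma Sm_app {A} (l1 l2 : list A) f : Sm (l1 ++ l2) f = Sm l1 f + Sm l2 f.
Proof. induction l1; simpl. unfold Sm; simpl; lra. rewrite !Sm_cons, IHl1. lra. Qed.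

Lemma Sm_map {A B} (g : A -> B) l f : Sm (map g l) f = Sm l (fun x => f (g x)).
Proof. unfold Sm. rewrite map_map. reflexivity. Qed.

Lemma Sm_ext {A} (l : list A) f g : (forall x, In x l -> f x = g x) -> Sm l f = Sm l g.
Proof. induction l; intros H; [reflexivity|]. rewrite !Sm_cons, H, IHl; auto; [intros; apply H|]; simpl; auto. Qed.

Lemma Sm_le {A} (l : list A) f g : (forall x, In x l -> f x <= g x) -> Sm l f <= Sm l g.
Proof. induction l; intros H. unfold Sm; simpl; lra. rewrite !Sm_cons.
  assert (f a <= g a) by (apply H; simpl; auto).
  assert (Sm l f <= Sm l g) by (apply IHl; intros; apply H; simpl; auto). lra. Qed.

Lemma Sm_plus {A} (l : list A) f g : Sm l (fun x => f x + g x) = Sm l f + Sm l g.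
Proof. induction l. unfold Sm; simpl; lra. rewrite !Sm_cons, IHl. lra. Qed.

Lemma Sm_scal {A} (l : list A) c f : Sm l (fun x => c * f x) = c * Sm l f.
Proof. induction l. unfold Sm; simpl; lra. rewrite !Sm_cons, IHl. lra. Qed.

Lemma Sm_const {A} (l : list A) c : Sm l (fun _ => c) = INR (length l) * c.
Proof. induction l. unfold Sm; simpl; lra. rewrite Sm_cons, IHl. simpl length. rewrite S_INR. lra. Qed.

Lemma Sm_nonneg {A} (l : list A) f : (forall x, In x l -> 0 <= f x) -> 0 <= Sm l f.
Proof. intros H. apply Rle_trans with (Sm l (fun _ => 0)).
  rewrite Sm_const; lra. apply Sm_le; auto. Qed.

Lemma Sm_exch {A B} (l1 : list A) (l2 : list B) F :
  Sm l1 (fun x => Sm l2 (fun y => F x y)) = Sm l2 (fun y => Sm l1 (fun x => F x y)).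
Proof. induction l1. rewrite Sm_nil. rewrite (Sm_ext _ _ (fun _ => 0)) by reflexivity.
  rewrite Sm_const; lra.
  rewrite Sm_cons, IHl1. rewrite <- Sm_plus. apply Sm_ext. intros; rewrite Sm_cons; lra. Qed.

Lemma Sm_prod {A B} (l1 : list A) (l2 : list B) F :
  Sm (list_prod l1 l2) F = Sm l1 (fun x => Sm l2 (fun y => F (x, y))).
Proof. induction l1. reflexivity. simpl list_prod. rewrite Sm_app, Sm_map, IHl1, Sm_cons. reflexivity. Qed.

Definition indb {A} (p : A -> bool) (x : A) : R := if p x then 1 else 0.

Lemma Sm_filter {A} (l : list A) p : INR (length (filter p l)) = Sm l (indb p).
Proof. induction l. reflexivity. rewrite Sm_cons. unfold indb at 1. simpl. destruct (p a); simpl length;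
  rewrite ?S_INR, IHl; lra. Qed.

Lemma Sm_ge_mem {A} (l : list A) f a : (forall x, In x l -> 0 <= f x) -> In a l -> f a <= Sm l f.
Proof. induction l; intros H Ha; [destruct Ha|]. rewrite Sm_cons. destruct Ha as [<-|Ha].
  assert (0 <= Sm l f) by (apply Sm_nonneg; intros; apply H; simpl; auto). lra.
  assert (f a <= Sm l f) by (apply IHl; auto; intros; apply H; simpl; auto).
  assert (0 <= f a0) by (apply H; simpl; auto). lra. Qed.

Lemma Sm_single {A} (l : list A) (p : A -> bool) :
  (forall a b, In a l -> In b l -> p a = true -> p b = true -> a = b) -> NoDup l ->
  Sm l (indb p) <= 1.
Proof. induction l; intros H Hn. unfold Sm; simpl; lra.
  inversion Hn; subst. rewrite Sm_cons. unfold indb at 1. destruct (p a) eqn:E.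
  - rewrite (Sm_ext _ _ (fun _ => 0)). rewrite Sm_const. lra.
    intros x Hx. unfold indb. destruct (p x) eqn:E2; auto.
    exfalso. assert (a = x) by (apply H; simpl; auto). subst. contradiction.
  - rewrite Rplus_0_l. apply IHl; auto. intros; apply H; simpl; auto. Qed.

Lemma Sm_nat {A} (l : list A) g : INR (fold_right Nat.add 0%nat (map g l)) = Sm l (fun x => INR (g x)).
Proof. induction l. reflexivity. simpl. rewrite plus_INR, IHl. reflexivity. Qed.

Lemma In_box N x : (0 <= N)%Z -> (In x (box N) <-> (-N <= x <= N)%Z).
Proof. intros HN. unfold box. rewrite in_map_iff. split.
  - intros [y [<- Hy]]. rewrite in_map_iff in Hy. destruct Hy as [i [<- Hi]].
    rewrite in_seq in Hi. lia.
  - intros Hx. exists (x + N)%Z. split. lia. rewrite in_map_iff.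
    exists (Z.to_nat (x + N)). split. lia. rewrite in_seq. lia. Qed.

Lemma NoDup_box N : NoDup (box N).
Proof. unfold box. apply NoDup_map_NoDup_ForallPairs. intros x y _ _ H; lia.
  apply NoDup_map_NoDup_ForallPairs. intros x y _ _ H; lia. apply seq_NoDup. Qed.

Lemma length_box N : (0 <= N)%Z -> INR (length (box N)) = IZR (2 * N + 1).
Proof. intros. unfold box. rewrite !length_map, length_seq. rewrite INR_IZR_INZ. f_equal. lia. Qed.

Definition dl (N : Z) : list Z := map (fun i => Z.of_nat i + 1)%Z (seq 0 (Z.to_nat N)).

Lemma In_dl N d : (In d (dl N) <-> (1 <= d <= N)%Z).
Proof. unfold dl. rewrite in_map_iff. split.
  - intros [i [<- Hi]]. rewrite in_seq in Hi. lia.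
  - intros Hd. exists (Z.to_nat (d - 1)). split. lia. rewrite in_seq. lia. Qed.

Lemma divsum_S N h : divsum N h = Sm (dl N) (fun d => if (h mod d =? 0)%Z then / IZR d else 0).
Proof. unfold divsum. fold (dl N). induction (dl N). reflexivity.
  rewrite Sm_cons. cbn [filter map fold_right]. destruct (h mod a =? 0)%Z; cbn [map fold_right]; rewrite IHl; lra. Qed.

Lemma CL (l : list Z) (p : Z -> bool) (A m : Z) : NoDup l -> (0 < m)%Z -> (0 <= A)%Z ->
  (forall x, In x l -> p x = true -> (-A <= x <= A)%Z) ->
  (forall x y, In x l -> In y l -> p x = true -> p y = true -> ((y - x) mod m = 0)%Z) ->
  Sm l (indb p) <= 2 * IZR A / IZR m + 1.
Proof. intros Hn Hm HA Hb Hc. rewrite <- Sm_filter.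
  set (f := fun x => Z.to_nat ((x + A) / m)).
  assert (Hnd : NoDup (map f (filter p l))).
  { apply NoDup_map_NoDup_ForallPairs; [|apply NoDup_filter; auto].
    intros x y Hx Hy Hf. apply filter_In in Hx, Hy. destruct Hx as [Hx Px], Hy as [Hy Py].
    specialize (Hb x Hx Px) as Bx. specialize (Hb y Hy Py) as By.
    specialize (Hc x y Hx Hy Px Py). unfold f in Hf.
    assert (0 <= (x + A) / m)%Z by (apply Z.div_pos; lia).
    assert (0 <= (y + A) / m)%Z by (apply Z.div_pos; lia).
    assert (Hq : ((x + A) / m = (y + A) / m)%Z) by lia.
    apply Z.mod_divide in Hc; [|lia]. destruct Hc as [t Ht].
    pose proof (Z.div_mod (x + A) m ltac:(lia)). pose proof (Z.div_mod (y + A) m ltac:(lia)).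
    pose proof (Z.mod_pos_bound (x + A) m Hm). pose proof (Z.mod_pos_bound (y + A) m Hm).
    rewrite Hq in *. assert (t = 0)%Z by nia. subst. lia. }
  set (K := Z.to_nat (2 * A / m)).
  assert (Hinc : incl (map f (filter p l)) (seq 0 (S K))).
  { intros z Hz. rewrite in_map_iff in Hz. destruct Hz as [x [<- Hx]].
    apply filter_In in Hx. destruct Hx as [Hx Px]. specialize (Hb x Hx Px).
    rewrite in_seq. unfold f, K. split. lia.
    assert (0 <= (x + A) / m)%Z by (apply Z.div_pos; lia).
    assert ((x + A) / m <= 2 * A / m)%Z by (apply Z.div_le_mono; lia). lia. }
  pose proof (NoDup_incl_length Hnd Hinc) as Hle. rewrite length_map, length_seq in Hle.
  apply le_INR in Hle. eapply Rle_trans; [exact Hle|]. rewrite S_INR. unfold K.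
  rewrite INR_IZR_INZ, Z2Nat.id by (apply Z.div_pos; lia).
  pose proof (Z.mul_div_le (2 * A) m Hm) as Hmd. apply IZR_le in Hmd.
  rewrite mult_IZR in Hmd. apply IZR_lt in Hm.
  assert (IZR (2 * A / m) <= 2 * IZR A / IZR m).
  { apply Rmult_le_reg_l with (IZR m); auto. field_simplify; [|lra].
    rewrite mult_IZR in Hmd. lra. }
  lra. Qed.

Lemma ln_le_m1 y : 0 < y -> ln y <= y - 1.
Proof. intros. pose proof (exp_ineq1_le (ln y)). rewrite exp_ln in H0; lra. Qed.

Lemma ln_step x : 0 < x -> / (x + 1) <= ln ((x + 1) / x).
Proof. intros Hx. assert (Hq : (x + 1) / x = / (x / (x + 1))) by (field; lra).
  rewrite Hq, ln_Rinv by (apply Rdiv_lt_0_compat; lra).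
  pose proof (ln_le_m1 (x / (x + 1)) ltac:(apply Rdiv_lt_0_compat; lra)).
  assert (x / (x + 1) - 1 = - / (x + 1)) by (field; lra). lra. Qed.

Lemma dl_seq N : dl N = map (fun i => Z.of_nat i + 1)%Z (seq 0 (Z.to_nat N)).
Proof. reflexivity. Qed.

Lemma harm_n n : (1 <= n)%nat ->
  Sm (map (fun i => Z.of_nat i + 1)%Z (seq 0 n)) (fun d => / IZR d) <= 1 + ln (INR n).
Proof. induction n; intros Hn. lia. destruct n.
  - simpl. rewrite ln_1. unfold Sm; simpl. lra.
  - rewrite seq_S, map_app, Sm_app. cbn [map]. rewrite Sm_cons, Sm_nil.
    specialize (IHn ltac:(lia)).
    rewrite (plus_IZR (Z.of_nat (0 + S n))), <- INR_IZR_INZ, Nat.add_0_l.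
    assert (Hp : 0 < INR (S n)) by (apply lt_0_INR; lia).
    pose proof (ln_step (INR (S n)) Hp).
    rewrite (S_INR (S n)).
    assert (Hl : ln ((INR (S n) + 1) / INR (S n)) = ln (INR (S n) + 1) - ln (INR (S n))).
    { unfold Rdiv. rewrite ln_mult, ln_Rinv; try lra. apply Rinv_0_lt_compat; lra. }
    lra. Qed.

Lemma harm N : (1 <= N)%Z -> Sm (dl N) (fun d => / IZR d) <= 1 + ln (IZR N).
Proof. intros. rewrite dl_seq. replace (IZR N) with (INR (Z.to_nat N)).
  apply harm_n; lia. rewrite INR_IZR_INZ. f_equal; lia. Qed.

Lemma zeta_step x s : 0 < x -> 0 < s ->
  / ((x + 1) * Rpower (x + 1) s) <= (/ Rpower x s - / Rpower (x + 1) s) / s.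
Proof. intros Hx Hs.
  set (a := Rpower x s). set (b := Rpower (x + 1) s).
  assert (Ha : 0 < a) by (unfold a, Rpower; apply exp_pos).
  assert (Hb : 0 < b) by (unfold b, Rpower; apply exp_pos).
  assert (Hba : b = Rpower ((x + 1) / x) s * a).
  { unfold a, b. rewrite Rpower_mult_distr. f_equal. field; lra.
    apply Rdiv_lt_0_compat; lra. lra. }
  assert (Hr : 1 + s / (x + 1) <= Rpower ((x + 1) / x) s).
  { unfold Rpower. pose proof (exp_ineq1_le (s * ln ((x + 1) / x))).
    pose proof (ln_step x Hx). assert (s * / (x + 1) <= s * ln ((x + 1) / x)).
    apply Rmult_le_compat_l; lra. unfold Rdiv. lra. }
  assert (Hk : a * (1 + s / (x + 1)) <= b).
  { rewrite Hba. rewrite Rmult_comm. apply Rmult_le_compat_r; lra. }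
  apply Rmult_le_reg_l with (s * a * b * (x + 1)).
  apply Rmult_lt_0_compat; [|lra]. apply Rmult_lt_0_compat; [|lra]. apply Rmult_lt_0_compat; lra.
  assert (E1 : s * a * b * (x + 1) * / ((x + 1) * b) = s * a) by (field; lra).
  assert (E2 : s * a * b * (x + 1) * ((/ a - / b) / s) = (b - a) * (x + 1)) by (field; lra).
  rewrite E1, E2.
  assert (E3 : a * (1 + s / (x + 1)) = a + a * s / (x + 1)) by (field; lra).
  rewrite E3 in Hk.
  assert (a * s / (x + 1) * (x + 1) = a * s) by (field; lra). nra. Qed.

Lemma zeta_n n s : (1 <= n)%nat -> 0 < s ->
  Sm (map (fun i => Z.of_nat i + 1)%Z (seq 0 n)) (fun d => / (IZR d * Rpower (IZR d) s))
    <= 1 + (1 - / Rpower (INR n) s) / s.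
Proof. intros Hn Hs. induction n. lia. destruct n.
  - simpl. unfold Sm; simpl. assert (E : Rpower 1 s = 1) by (unfold Rpower; rewrite ln_1, Rmult_0_r, exp_0; auto). rewrite E, Rinv_1. unfold Rdiv. lra.
  - rewrite seq_S, map_app, Sm_app. cbn [map]. rewrite Sm_cons, Sm_nil.
    specialize (IHn ltac:(lia)).
    rewrite (plus_IZR (Z.of_nat (0 + S n))), <- INR_IZR_INZ, Nat.add_0_l.
    assert (Hp : 0 < INR (S n)) by (apply lt_0_INR; lia).
    pose proof (zeta_step (INR (S n)) s Hp Hs).
    rewrite (S_INR (S n)). unfold Rdiv in *. lra. Qed.

Lemma zeta N s : (1 <= N)%Z -> 0 < s ->
  Sm (dl N) (fun d => / (IZR d * Rpower (IZR d) s)) <= 1 + / s.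
Proof. intros. rewrite dl_seq. eapply Rle_trans. apply zeta_n; auto; lia.
  assert (0 < / Rpower (INR (Z.to_nat N)) s) by (apply Rinv_0_lt_compat; unfold Rpower; apply exp_pos).
  assert ((1 - / Rpower (INR (Z.to_nat N)) s) / s <= / s).
  { unfold Rdiv. rewrite <- (Rmult_1_l (/ s)) at 2. apply Rmult_le_compat_r. left; apply Rinv_0_lt_compat; auto. lra. }
  lra. Qed.

Definition cnt (N h x y : Z) : R :=
  Sm (box N) (fun a2 => Sm (box N) (fun a4 => if (x * a2 - y * a4 =? h)%Z then 1 else 0)).

Lemma rN_S N h : INR (rN N h) = Sm (box N) (fun a1 => Sm (box N) (fun a3 => cnt N h a1 a3)).
Proof. unfold rN. rewrite Sm_filter. rewrite !Sm_prod. apply Sm_ext. intros a1 _.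
  unfold cnt. rewrite Sm_exch. reflexivity. Qed.

Lemma cnt_sym N h x y : cnt N h x y = cnt N (- h) y x.
Proof. unfold cnt. rewrite Sm_exch. apply Sm_ext; intros u _. apply Sm_ext; intros v _.
  destruct (Z.eqb_spec (x * v - y * u) h), (Z.eqb_spec (y * u - x * v) (- h)); lia || reflexivity. Qed.

Lemma cnt_nonneg N h x y : 0 <= cnt N h x y.
Proof. unfold cnt. apply Sm_nonneg; intros. apply Sm_nonneg; intros. destruct (_ =? _)%Z; lra. Qed.

Definition Q (N h : Z) : R :=
  Sm (box N) (fun x => Sm (box N) (fun y => if (Z.abs x <=? Z.abs y)%Z then cnt N h x y else 0)).

Lemma rN_Q N h : INR (rN N h) <= Q N h + Q N (- h).
Proof. rewrite rN_S.
  apply Rle_trans with (Sm (box N) (fun a1 => Sm (box N) (fun a3 =>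
     (if (Z.abs a1 <=? Z.abs a3)%Z then cnt N h a1 a3 else 0) +
     (if (Z.abs a3 <=? Z.abs a1)%Z then cnt N (- h) a3 a1 else 0)))).
  { apply Sm_le; intros a1 _. apply Sm_le; intros a3 _. rewrite <- cnt_sym.
    pose proof (cnt_nonneg N h a1 a3).
    destruct (Z.leb_spec (Z.abs a1) (Z.abs a3)), (Z.leb_spec (Z.abs a3) (Z.abs a1)); lra || lia. }
  rewrite (Sm_ext _ _ (fun a1 => Sm (box N) (fun a3 => if (Z.abs a1 <=? Z.abs a3)%Z then cnt N h a1 a3 else 0)
     + Sm (box N) (fun a3 => if (Z.abs a3 <=? Z.abs a1)%Z then cnt N (- h) a3 a1 else 0))).
  2:{ intros; apply Sm_plus. }
  rewrite Sm_plus. unfold Q. rewrite (Sm_exch (box N) (box N) (fun a1 a3 => if (Z.abs a3 <=? Z.abs a1)%Z then cnt N (- h) a3 a1 else 0)).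
  lra. Qed.

Lemma Rdiv_le_0_compat a b : 0 <= a -> 0 < b -> 0 <= a / b.
Proof. intros; unfold Rdiv; apply Rmult_le_pos; [|left; apply Rinv_0_lt_compat]; auto. Qed.

Definition G (N h x y : Z) : R := Sm (dl N) (fun d =>
  if (negb (y =? 0) && (h mod d =? 0) && (x mod d =? 0) && (y mod d =? 0))%Z%bool
  then IZR d / IZR (Z.abs y) else 0).

Lemma G_nonneg N h x y : 0 <= G N h x y.
Proof. unfold G. apply Sm_nonneg. intros d Hd. apply In_dl in Hd.
  destruct (_ && _)%bool. 2: lra. destruct (Z.eq_dec y 0). subst. simpl. unfold Rdiv. rewrite Rinv_0. lra.
  apply Rdiv_le_0_compat. apply IZR_le; lia. apply IZR_lt; lia. Qed.

Lemma cnt_le1 N h x y : (y <> 0)%Z -> cnt N h x y <=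
  Sm (box N) (fun a2 => if ((x * a2 - h) mod y =? 0)%Z then 1 else 0).
Proof. intros Hy. unfold cnt. apply Sm_le. intros a2 _.
  destruct (Z.eqb_spec ((x * a2 - h) mod y) 0) as [E|E].
  - apply (Sm_single (box N) (fun a4 => (x * a2 - y * a4 =? h)%Z)); [|apply NoDup_box].
    intros a b _ _ Ha Hb. cbv beta in Ha, Hb. apply Z.eqb_eq in Ha, Hb.
    assert (y * a = y * b)%Z by lia. apply Z.mul_cancel_l in H; auto.
  - rewrite (Sm_ext _ _ (fun _ => 0)). rewrite Sm_const; lra.
    intros a4 _. destruct (Z.eqb_spec (x * a2 - y * a4) h); auto.
    exfalso. apply E. apply Z.mod_divide; auto. exists a4. lia. Qed.

Lemma cnt_bound N h x y : (1 <= N)%Z -> In y (box N) -> (y <> 0)%Z ->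
  cnt N h x y <= 1 + 2 * IZR N * G N h x y.
Proof. intros HN Hyb Hy. apply In_box in Hyb; [|lia].
  eapply Rle_trans. apply cnt_le1; auto.
  pose proof (G_nonneg N h x y) as HG0.
  set (g := Z.gcd x y).
  assert (Hg0 : (0 < g)%Z). { pose proof (Z.gcd_nonneg x y). assert (g <> 0)%Z. unfold g. rewrite Z.gcd_eq_0. lia. lia. }
  destruct (Z.gcd_divide_l x y) as [xq Hxq]. destruct (Z.gcd_divide_r x y) as [yq Hyq].
  fold g in Hxq, Hyq.
  assert (Hcop : Z.gcd yq xq = 1%Z).
  { pose proof (Z.gcd_div_gcd x y g ltac:(lia) eq_refl) as Hc.
    rewrite Hxq, Hyq, !Z.div_mul in Hc by lia. rewrite Z.gcd_comm. auto. }
  assert (Hgy : (g <= Z.abs y)%Z).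
  { apply Z.divide_pos_le. lia. apply Z.divide_abs_r. exists yq; auto. }
  destruct (Z.eqb_spec (h mod g) 0) as [Eh|Eh].
  - assert (Hm : (0 < Z.abs yq)%Z) by (destruct (Z.eq_dec yq 0) as [E0|]; [rewrite E0 in Hyq; lia | lia]).
    eapply Rle_trans. apply (CL (box N) _ N (Z.abs yq)); auto; try lia. apply NoDup_box.
    + intros z Hz _. apply In_box in Hz; lia.
    + intros a b _ _ Ha Hb. cbv beta in Ha, Hb. apply Z.eqb_eq in Ha, Hb.
      apply Z.mod_divide in Ha; auto. apply Z.mod_divide in Hb; auto.
      apply Z.mod_divide. lia. apply Z.divide_abs_l.
      assert (Hd : (y | x * (b - a))%Z).
      { destruct Ha as [ka Hka]; destruct Hb as [kb Hkb]. exists (kb - ka)%Z. lia. }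
      rewrite Hxq, Hyq in Hd. apply (Z.gauss _ xq). 2: auto.
      destruct Hd as [k Hk]. exists k. apply Z.mul_cancel_r with g. lia. lia.
    + assert (Hterm : IZR g / IZR (Z.abs y) <= G N h x y).
      { unfold G. eapply Rle_trans; [|apply (Sm_ge_mem _ _ g)].
        - assert (E : (negb (y =? 0) && (h mod g =? 0) && (x mod g =? 0) && (y mod g =? 0))%Z%bool = true).
          { apply andb_true_intro; split. apply andb_true_intro; split. apply andb_true_intro; split.
            apply Bool.negb_true_iff, Z.eqb_neq; auto. apply Z.eqb_eq; auto.
            apply Z.eqb_eq, Z.mod_divide; [lia|exists xq; auto].
            apply Z.eqb_eq, Z.mod_divide; [lia|exists yq; auto]. }
          cbv beta. rewrite E. lra.
        - intros d Hd. apply In_dl in Hd. destruct (_ && _)%bool; [|lra].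
          apply Rdiv_le_0_compat. apply IZR_le; lia. apply IZR_lt; lia.
        - apply In_dl. lia. }
      assert (Habs : Z.abs y = (Z.abs yq * g)%Z) by (rewrite Hyq, Z.abs_mul; lia).
      rewrite Habs in Hterm. rewrite mult_IZR in Hterm.
      assert (0 < IZR g) by (apply IZR_lt; lia). assert (0 < IZR (Z.abs yq)) by (apply IZR_lt; lia).
      assert (IZR g / (IZR (Z.abs yq) * IZR g) = / IZR (Z.abs yq)) by (field; lra).
      rewrite H1 in Hterm. assert (0 <= IZR N) by (apply IZR_le; lia).
      assert (2 * IZR N * / IZR (Z.abs yq) <= 2 * IZR N * G N h x y) by (apply Rmult_le_compat_l; lra).
      unfold Rdiv. lra.
  - rewrite (Sm_ext _ _ (fun _ => 0)). rewrite Sm_const. pose proof (IZR_le 0 N ltac:(lia)). nra.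
    intros a2 _. destruct (Z.eqb_spec ((x * a2 - h) mod y) 0) as [E|E]; auto.
    exfalso. apply Eh. apply Z.mod_divide in E; auto. apply Z.mod_divide. lia.
    destruct E as [k Hk]. exists (xq * a2 - k * yq)%Z. rewrite Hxq, Hyq in Hk. lia. Qed.

Lemma inner_x N d y : (1 <= N)%Z -> (1 <= d)%Z -> In y (box N) -> (y <> 0)%Z -> (y mod d = 0)%Z ->
  Sm (box N) (fun x => if ((Z.abs x <=? Z.abs y) && (x mod d =? 0))%Z%bool then IZR d / IZR (Z.abs y) else 0) <= 3.
Proof. intros HN Hd Hy Hy0 Hyd. apply In_box in Hy; [|lia].
  assert (Hdy : (d <= Z.abs y)%Z).
  { apply Z.divide_pos_le. lia. apply Z.divide_abs_r. apply Z.mod_divide; auto; lia. }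
  rewrite (Sm_ext _ _ (fun x => IZR d / IZR (Z.abs y) *
     indb (fun x => ((Z.abs x <=? Z.abs y) && (x mod d =? 0))%Z%bool) x)).
  2:{ intros x _. unfold indb. destruct (_ && _)%bool; lra. }
  rewrite Sm_scal.
  pose proof (CL (box N) (fun x => ((Z.abs x <=? Z.abs y) && (x mod d =? 0))%Z%bool) (Z.abs y) d
    (NoDup_box N) ltac:(lia) ltac:(lia)) as H.
  assert (Hc : Sm (box N) (indb (fun x => ((Z.abs x <=? Z.abs y) && (x mod d =? 0))%Z%bool))
     <= 2 * IZR (Z.abs y) / IZR d + 1).
  { apply H.
    - intros x _ Hx. apply andb_prop in Hx. destruct Hx as [Hx _]. apply Z.leb_le in Hx. lia.
    - intros a b _ _ Ha Hb. apply andb_prop in Ha, Hb. destruct Ha as [_ Ha]; destruct Hb as [_ Hb].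
      apply Z.eqb_eq in Ha, Hb. apply Z.mod_divide in Ha, Hb; try lia. apply Z.mod_divide. lia.
      apply Z.divide_sub_r; auto. }
  assert (0 < IZR d) by (apply IZR_lt; lia). assert (0 < IZR (Z.abs y)) by (apply IZR_lt; lia).
  assert (IZR d <= IZR (Z.abs y)) by (apply IZR_le; lia).
  assert (0 <= IZR d / IZR (Z.abs y)) by (apply Rdiv_le_0_compat; lra).
  apply Rle_trans with (IZR d / IZR (Z.abs y) * (2 * IZR (Z.abs y) / IZR d + 1)).
  apply Rmult_le_compat_l; auto.
  assert (E : IZR d / IZR (Z.abs y) * (2 * IZR (Z.abs y) / IZR d + 1) = 2 + IZR d / IZR (Z.abs y)) by (field; lra).
  rewrite E. assert (IZR d / IZR (Z.abs y) <= 1).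
  { apply Rmult_le_reg_r with (IZR (Z.abs y)); auto. unfold Rdiv. rewrite Rmult_assoc, Rinv_l; lra. }
  lra. Qed.

Lemma count_mult N d : (1 <= N)%Z -> (1 <= d <= N)%Z ->
  Sm (box N) (fun y => if (y mod d =? 0)%Z then 3 else 0) <= 9 * IZR N / IZR d.
Proof. intros HN Hd.
  rewrite (Sm_ext _ _ (fun y => 3 * indb (fun y => (y mod d =? 0)%Z) y)).
  2:{ intros y _. unfold indb. destruct (_ =? _)%Z; lra. }
  rewrite Sm_scal.
  assert (Hc : Sm (box N) (indb (fun y => (y mod d =? 0)%Z)) <= 2 * IZR N / IZR d + 1).
  { apply CL. apply NoDup_box. lia. lia.
    - intros x Hx _. apply In_box in Hx; lia.
    - intros a b _ _ Ha Hb. apply Z.eqb_eq in Ha, Hb. apply Z.mod_divide in Ha, Hb; try lia. apply Z.mod_divide. lia.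
      apply Z.divide_sub_r; auto. }
  assert (0 < IZR d) by (apply IZR_lt; lia). assert (IZR d <= IZR N) by (apply IZR_le; lia).
  assert (1 <= IZR N / IZR d).
  { apply Rmult_le_reg_r with (IZR d); auto. unfold Rdiv. rewrite Rmult_assoc, Rinv_l; lra. }
  unfold Rdiv in *. lra. Qed.

Lemma Gsum N h : (1 <= N)%Z ->
  Sm (box N) (fun x => Sm (box N) (fun y => if (Z.abs x <=? Z.abs y)%Z then G N h x y else 0))
  <= 9 * IZR N * divsum N h.
Proof. intros HN. rewrite divsum_S.
  set (F := fun d y x => if ((Z.abs x <=? Z.abs y) && (negb (y =? 0) && (h mod d =? 0) && (x mod d =? 0) && (y mod d =? 0)))%Z%bool
           then IZR d / IZR (Z.abs y) else 0).
  rewrite (Sm_ext _ _ (fun x => Sm (box N) (fun y => Sm (dl N) (fun d => F d y x)))).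
  2:{ intros x _. apply Sm_ext. intros y _. unfold G, F. destruct (Z.leb _ _).
      - apply Sm_ext. intros d _. reflexivity.
      - rewrite (Sm_ext _ _ (fun _ => 0)). rewrite Sm_const. lra. intros; reflexivity. }
  rewrite Sm_exch.
  rewrite (Sm_ext _ _ (fun y => Sm (dl N) (fun d => Sm (box N) (fun x => F d y x)))).
  2:{ intros y _. apply Sm_exch. }
  rewrite Sm_exch. rewrite <- Sm_scal. apply Sm_le. intros d Hd. apply In_dl in Hd.
  destruct (Z.eqb_spec (h mod d) 0) as [Eh|Eh].
  - apply Rle_trans with (Sm (box N) (fun y => if (y mod d =? 0)%Z then 3 else 0)).
    2:{ eapply Rle_trans. apply count_mult; auto. unfold Rdiv. lra. }
    apply Sm_le. intros y Hy. destruct (Z.eqb_spec y 0) as [Ey|Ey].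
    + rewrite (Sm_ext _ _ (fun _ => 0)). rewrite Sm_const. destruct (_ =? _)%Z; lra.
      intros x _. unfold F. rewrite Ey. simpl. destruct (_ <=? _)%Z; reflexivity.
    + destruct (Z.eqb_spec (y mod d) 0) as [Eyd|Eyd].
      * eapply Rle_trans; [|apply (inner_x N d y); auto; lia]. apply Sm_le. intros x _. unfold F.
        rewrite Eh, Eyd. destruct (Z.eqb_spec y 0); [contradiction|]. simpl.
        destruct (_ <=? _)%Z, (_ =? _)%Z; simpl; lra.
      * rewrite (Sm_ext _ _ (fun _ => 0)). rewrite Sm_const. lra.
        intros x _. unfold F. destruct (Z.eqb_spec (y mod d) 0); [contradiction|].
        rewrite !Bool.andb_false_r. reflexivity.
  - rewrite (Sm_ext _ _ (fun _ => 0)). rewrite Sm_const. lra.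
    intros y _. rewrite (Sm_ext _ _ (fun _ => 0)). rewrite Sm_const. lra.
    intros x _. unfold F. destruct (Z.eqb_spec (h mod d) 0); [contradiction|].
    rewrite Bool.andb_false_r. simpl. rewrite !Bool.andb_false_r. reflexivity. Qed.

Lemma cnt_le_all N h x y : (0 <= N)%Z -> cnt N h x y <= IZR (2 * N + 1) ^ 2.
Proof. intros. unfold cnt. eapply Rle_trans.
  apply Sm_le with (g := fun _ => Sm (box N) (fun _ => 1)). intros. apply Sm_le. intros.
  destruct (_ =? _)%Z; lra. rewrite !Sm_const, length_box by auto. lra. Qed.

Lemma Q_bound N h : (1 <= N)%Z -> Q N h <= 2 * IZR (2 * N + 1) ^ 2 + 18 * IZR N ^ 2 * divsum N h.
Proof. intros HN. set (C := IZR (2 * N + 1) ^ 2).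
  assert (HC : 0 <= C) by (unfold C; apply pow2_ge_0).
  unfold Q.
  eapply Rle_trans.
  apply Sm_le with (g := fun x => Sm (box N) (fun y =>
     ((if (x =? 0)%Z then 1 else 0) * (C * (if (y =? 0)%Z then 1 else 0)) + 1) +
     2 * IZR N * (if (Z.abs x <=? Z.abs y)%Z then G N h x y else 0))).
  { intros x Hx. apply Sm_le. intros y Hy.
    pose proof (G_nonneg N h x y). assert (0 <= IZR N) by (apply IZR_le; lia).
    assert (0 <= 2 * IZR N * G N h x y) by (apply Rmult_le_pos; lra).
    destruct (Z.leb_spec (Z.abs x) (Z.abs y)).
    - destruct (Z.eqb_spec y 0) as [Ey|Ey].
      + assert (x = 0)%Z by lia. subst. simpl. pose proof (cnt_le_all N h 0 0 ltac:(lia)). fold C in H3. lra.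
      + pose proof (cnt_bound N h x y HN Hy Ey).
        assert (0 <= (if (x =? 0)%Z then 1 else 0) * (C * (if (y =? 0)%Z then 1 else 0))).
        { apply Rmult_le_pos. destruct (_ =? _)%Z; lra. apply Rmult_le_pos; auto. destruct (_ =? _)%Z; lra. }
        lra.
    - assert (0 <= (if (x =? 0)%Z then 1 else 0) * (C * (if (y =? 0)%Z then 1 else 0))).
      { apply Rmult_le_pos. destruct (_ =? _)%Z; lra. apply Rmult_le_pos; auto. destruct (_ =? _)%Z; lra. }
      lra. }
  rewrite (Sm_ext _ _ (fun x => Sm (box N) (fun y => (if (x =? 0)%Z then 1 else 0) * (C * (if (y =? 0)%Z then 1 else 0)))
     + Sm (box N) (fun _ => 1) + 2 * IZR N * Sm (box N) (fun y => if (Z.abs x <=? Z.abs y)%Z then G N h x y else 0))).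
  2:{ intros x _. rewrite Sm_plus, Sm_plus, (Sm_scal _ (2 * IZR N)). reflexivity. }
  rewrite Sm_plus, Sm_plus, (Sm_scal _ (2 * IZR N)).
  pose proof (Gsum N h HN) as HG.
  assert (H1 : Sm (box N) (fun x => Sm (box N) (fun y => (if (x =? 0)%Z then 1 else 0) * (C * (if (y =? 0)%Z then 1 else 0)))) <= C).
  { rewrite (Sm_ext _ _ (fun x => C * Sm (box N) (indb (fun y => (y =? 0)%Z)) * indb (fun x => (x =? 0)%Z) x)).
    2:{ intros x _. rewrite Sm_scal, Sm_scal. unfold indb. ring. }
    rewrite Sm_scal.
    assert (Hs : Sm (box N) (indb (fun y => (y =? 0)%Z)) <= 1).
    { apply Sm_single. intros a b _ _ Ha Hb. apply Z.eqb_eq in Ha, Hb. lia. apply NoDup_box. }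
    assert (0 <= Sm (box N) (indb (fun y => (y =? 0)%Z))).
    { apply Sm_nonneg. intros; unfold indb; destruct (_ =? _)%Z; lra. }
    assert (C * Sm (box N) (indb (fun y => (y =? 0)%Z)) <= C) by nra.
    assert (0 <= C * Sm (box N) (indb (fun y => (y =? 0)%Z))) by nra. nra. }
  rewrite Sm_const, Sm_const, length_box by lia. fold C.
  assert (HN0 : 0 <= IZR N) by (apply IZR_le; lia).
  assert (2 * IZR N * (9 * IZR N * divsum N h) = 18 * IZR N ^ 2 * divsum N h) by ring.
  assert (2 * IZR N * Sm (box N) (fun x => Sm (box N) (fun y => if (Z.abs x <=? Z.abs y)%Z then G N h x y else 0))
     <= 2 * IZR N * (9 * IZR N * divsum N h)) by (apply Rmult_le_compat_l; lra).
  unfold C in *. simpl in *. lra. Qed.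

Lemma divsum_ge1 N h : (1 <= N)%Z -> 1 <= divsum N h.
Proof. intros. rewrite divsum_S. eapply Rle_trans; [|apply (Sm_ge_mem _ _ 1%Z)].
  - cbv beta. rewrite Z.mod_1_r. simpl. rewrite Rinv_1. lra.
  - intros d Hd. apply In_dl in Hd. destruct (_ =? _)%Z. left; apply Rinv_0_lt_compat, IZR_lt; lia. lra.
  - apply In_dl. lia. Qed.

Lemma divsum_opp N h : divsum N (- h) = divsum N h.
Proof. rewrite !divsum_S. apply Sm_ext. intros d Hd. apply In_dl in Hd.
  destruct (Z.eqb_spec (- h mod d) 0), (Z.eqb_spec (h mod d) 0); auto; exfalso.
  - apply n. apply Z.mod_divide; try lia. apply Z.mod_divide in e; try lia. apply Z.divide_opp_r in e. rewrite Z.opp_involutive in e. auto.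
  - apply n. apply Z.mod_divide; try lia. apply Z.mod_divide in e; try lia. apply Z.divide_opp_r. auto. Qed.

Lemma rN_univ N h : (2 <= N)%Z -> INR (rN N h) <= 64 * IZR N ^ 2 * divsum N h.
Proof. intros HN. eapply Rle_trans. apply rN_Q.
  pose proof (Q_bound N h ltac:(lia)). pose proof (Q_bound N (- h) ltac:(lia)).
  rewrite divsum_opp in H0. pose proof (divsum_ge1 N h ltac:(lia)).
  assert (HN2 : 2 <= IZR N) by (apply IZR_le; lia).
  assert (E : IZR (2 * N + 1) = 2 * IZR N + 1) by (rewrite plus_IZR, mult_IZR; auto).
  rewrite E in H, H0.
  assert ((2 * IZR N + 1) ^ 2 <= 7 * IZR N ^ 2) by nra.
  assert (0 <= IZR N ^ 2) by nra.
  assert (IZR N ^ 2 <= IZR N ^ 2 * divsum N h) by nra. nra. Qed.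

Definition T (N : Z) (j : nat) (L : Z) : R :=
  Sm (box (2 * N * N)) (fun h => (if (h mod L =? 0)%Z then 1 else 0) * divsum N h ^ j).

Definition ee (j : nat) : R := (/ 2) ^ j.
Fixpoint alpha (j : nat) : R := match j with O => 2 | S j => alpha j * (1 + 2 / ee j) end.

Lemma ee_pos j : 0 < ee j. Proof. unfold ee. apply pow_lt. lra. Qed.
Lemma alpha_pos j : 0 < alpha j.
Proof. induction j; simpl. lra. pose proof (ee_pos j). apply Rmult_lt_0_compat; auto.
  assert (0 < 2 / ee j) by (apply Rdiv_lt_0_compat; lra). lra. Qed.

Lemma Rpower_pos x s : 0 < Rpower x s. Proof. unfold Rpower. apply exp_pos. Qed.

Lemma lcm_pow L d e : (1 <= L)%Z -> (1 <= d)%Z -> 0 < e ->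
  / Rpower (IZR (Z.lcm L d)) e <= / Rpower (IZR L) (e / 2) * / Rpower (IZR d) (e / 2).
Proof. intros HL Hd He.
  assert (Hl : (0 < Z.lcm L d)%Z).
  { pose proof (Z.lcm_nonneg L d). destruct (Z.eq_dec (Z.lcm L d) 0); [|lia].
    apply Z.lcm_eq_0 in e0. lia. }
  assert (HLl : (L <= Z.lcm L d)%Z) by (apply Z.divide_pos_le; auto; apply Z.divide_lcm_l).
  assert (Hdl : (d <= Z.lcm L d)%Z) by (apply Z.divide_pos_le; auto; apply Z.divide_lcm_r).
  rewrite <- Rinv_mult. apply Rinv_le_contravar.
  apply Rmult_lt_0_compat; apply Rpower_pos.
  rewrite Rpower_mult_distr by (apply IZR_lt; lia).
  assert (E : Rpower (IZR (Z.lcm L d)) e = Rpower (IZR (Z.lcm L d) * IZR (Z.lcm L d)) (e / 2)).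
  { rewrite <- Rpower_mult_distr by (apply IZR_lt; lia). rewrite <- Rpower_plus. f_equal. field. }
  rewrite E. apply Rle_Rpower_l. lra. split.
  apply Rmult_lt_0_compat; apply IZR_lt; lia.
  rewrite <- !mult_IZR. apply IZR_le. nia. Qed.

Lemma T_bound N : (1 <= N)%Z -> forall j L, (1 <= L)%Z ->
  T N j L <= alpha j * IZR (2 * N * N) / Rpower (IZR L) (ee j) + divsum N 0 ^ j.
Proof. intros HN j. induction j; intros L HL.
  - unfold T. change (alpha 0) with 2. unfold ee. rewrite !pow_O. rewrite Rpower_1 by (apply IZR_lt; lia).
    rewrite (Sm_ext _ _ (indb (fun h => (h mod L =? 0)%Z))).
    2:{ intros; unfold indb; destruct (_ =? _)%Z; lra. }
    eapply Rle_trans. apply (CL _ _ (2 * N * N) L). apply NoDup_box. lia. lia.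
    + intros x Hx _. apply In_box in Hx; lia.
    + intros a b _ _ Ha Hb. apply Z.eqb_eq in Ha, Hb. apply Z.mod_divide in Ha, Hb; try lia. apply Z.mod_divide. lia.
      apply Z.divide_sub_r; auto.
    + lra.
  - set (X := IZR (2 * N * N)).
    assert (HX : 0 <= X) by (apply IZR_le; lia).
    assert (Hrec : T N (S j) L = Sm (dl N) (fun d => / IZR d * T N j (Z.lcm L d))).
    { unfold T. rewrite (Sm_ext (dl N) _ (fun d => Sm (box (2 * N * N)) (fun h => / IZR d *
        ((if (h mod Z.lcm L d =? 0)%Z then 1 else 0) * divsum N h ^ j)))).
      2:{ intros d _. rewrite Sm_scal. reflexivity. }
      rewrite <- Sm_exch. apply Sm_ext. intros h _.
      rewrite <- tech_pow_Rmult. rewrite (divsum_S N h) at 1.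
      match goal with |- ?a * (Sm ?l ?F * ?b) = _ => transitivity ((a * b) * Sm l F); [ring|] end.
      rewrite <- Sm_scal. apply Sm_ext. intros d Hd. apply In_dl in Hd.
      assert (Hiff : (h mod Z.lcm L d = 0)%Z <-> (h mod L = 0)%Z /\ (h mod d = 0)%Z).
      { assert (Z.lcm L d <> 0)%Z by (rewrite Z.lcm_eq_0; lia).
        rewrite !Z.mod_divide by lia. apply Z.lcm_divide_iff. }
      destruct (Z.eqb_spec (h mod Z.lcm L d) 0), (Z.eqb_spec (h mod L) 0), (Z.eqb_spec (h mod d) 0);
        try tauto; ring. }
    rewrite Hrec.
    eapply Rle_trans.
    { apply Sm_le with (g := fun d => / IZR d * (alpha j * X / Rpower (IZR (Z.lcm L d)) (ee j) + divsum N 0 ^ j)).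
      intros d Hd. apply In_dl in Hd. apply Rmult_le_compat_l.
      left; apply Rinv_0_lt_compat, IZR_lt; lia.
      apply IHj. pose proof (Z.divide_pos_le L (Z.lcm L d)). 
      pose proof (Z.lcm_nonneg L d). destruct (Z.eq_dec (Z.lcm L d) 0) as [E0|]. apply Z.lcm_eq_0 in E0. lia. lia. }
    rewrite (Sm_ext _ _ (fun d => alpha j * X * (/ IZR d * / Rpower (IZR (Z.lcm L d)) (ee j)) + divsum N 0 ^ j * / IZR d)).
    2:{ intros; unfold Rdiv; ring. }
    rewrite Sm_plus, Sm_scal, Sm_scal.
    assert (Hz : Sm (dl N) (fun d => / IZR d * / Rpower (IZR (Z.lcm L d)) (ee j))
       <= / Rpower (IZR L) (ee j / 2) * (1 + / (ee j / 2))).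
    { eapply Rle_trans. apply Sm_le with (g := fun d => / Rpower (IZR L) (ee j / 2) * / (IZR d * Rpower (IZR d) (ee j / 2))).
      - intros d Hd. apply In_dl in Hd. rewrite Rinv_mult.
        pose proof (lcm_pow L d (ee j) HL ltac:(lia) (ee_pos j)).
        assert (0 < / IZR d) by (apply Rinv_0_lt_compat, IZR_lt; lia).
        assert (0 < / Rpower (IZR (Z.lcm L d)) (ee j)) by (apply Rinv_0_lt_compat, Rpower_pos).
        nra.
      - rewrite Sm_scal. apply Rmult_le_compat_l. left; apply Rinv_0_lt_compat, Rpower_pos.
        apply zeta. lia. pose proof (ee_pos j). lra. }
    assert (Hd0 : divsum N 0 = Sm (dl N) (fun d => / IZR d)).
    { rewrite divsum_S. apply Sm_ext. intros d Hd. rewrite Z.mod_0_l; auto. apply In_dl in Hd; lia. }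
    rewrite <- Hd0.
    assert (Hee : ee (S j) = ee j / 2) by (unfold ee; simpl; field).
    rewrite Hee. simpl alpha.
    assert (/ (ee j / 2) = 2 / ee j) by (pose proof (ee_pos j); field; lra).
    rewrite H in Hz.
    pose proof (alpha_pos j).
    assert (0 <= alpha j * X) by (apply Rmult_le_pos; lra).
    assert (alpha j * X * Sm (dl N) (fun d => / IZR d * / Rpower (IZR (Z.lcm L d)) (ee j)) <=
            alpha j * X * (/ Rpower (IZR L) (ee j / 2) * (1 + 2 / ee j))) by (apply Rmult_le_compat_l; auto).
    unfold Rdiv at 1. simpl pow.
    assert (E : alpha j * (1 + 2 / ee j) * X * / Rpower (IZR L) (ee j / 2) =
                alpha j * X * (/ Rpower (IZR L) (ee j / 2) * (1 + 2 / ee j))) by ring.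
    rewrite E. lra. Qed.

Lemma H_def N : divsum N 0 = Sm (dl N) (fun d => / IZR d).
Proof. rewrite divsum_S. apply Sm_ext. intros d Hd. rewrite Z.mod_0_l; auto. apply In_dl in Hd; lia. Qed.

Lemma part1 : exists C : R, (0 < C)%R /\
     forall N : Z, (2 <= N)%Z ->
       (forall h : Z, (0 < Z.abs h <= 2 * N ^ 2)%Z ->
          (INR (rN N h) <= C * IZR N ^ 2 * divsum N h)%R) /\
       (INR (rN N 0) <= C * IZR N ^ 2 * ln (IZR N))%R.
Proof. exists 192. split. lra. intros N HN. 
  assert (HN2 : 2 <= IZR N) by (apply IZR_le; lia).
  assert (0 <= IZR N ^ 2) by nra.
  split.
  - intros h _. eapply Rle_trans. apply rN_univ; auto.
    pose proof (divsum_ge1 N h ltac:(lia)). nra.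
  - eapply Rle_trans. apply rN_univ; auto.
    rewrite H_def. pose proof (harm N ltac:(lia)).
    assert (Hl : / 2 < ln (IZR N)).
    { destruct (Rle_lt_or_eq_dec 2 (IZR N) HN2) as [Hlt|Heq].
      - pose proof (ln_increasing 2 (IZR N) ltac:(lra) Hlt). pose proof ln_lt_2. lra.
      - rewrite <- Heq. apply ln_lt_2. }
    assert (Sm (dl N) (fun d => / IZR d) <= 3 * ln (IZR N)) by lra.
    assert (64 * IZR N ^ 2 * Sm (dl N) (fun d => / IZR d) <= 64 * IZR N ^ 2 * (3 * ln (IZR N))).
    { apply Rmult_le_compat_l; nra. }
    lra. Qed.

Lemma H_pow N k : (1 <= N)%Z -> (1 <= k)%nat ->
  divsum N 0 ^ k <= (1 + INR k / 2) ^ k * IZR N ^ 2.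
Proof. intros HN Hk. set (s := 2 / INR k).
  assert (Hk0 : 0 < INR k) by (apply lt_0_INR; lia).
  assert (Hs : 0 < s) by (unfold s; apply Rdiv_lt_0_compat; lra).
  assert (HN0 : 0 < IZR N) by (apply IZR_lt; lia).
  assert (HH : divsum N 0 <= Rpower (IZR N) s * (1 + INR k / 2)).
  { rewrite H_def. eapply Rle_trans.
    apply Sm_le with (g := fun d => Rpower (IZR N) s * / (IZR d * Rpower (IZR d) s)).
    - intros d Hd. apply In_dl in Hd.
      assert (0 < IZR d) by (apply IZR_lt; lia).
      assert (Rpower (IZR d) s <= Rpower (IZR N) s) by (apply Rle_Rpower_l; [lra|split; [lra|apply IZR_le; lia]]).
      pose proof (Rpower_pos (IZR d) s).
      rewrite Rinv_mult. 
      assert (E : / IZR d = Rpower (IZR d) s * (/ IZR d * / Rpower (IZR d) s)) by (field; lra).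
      rewrite E at 1. apply Rmult_le_compat_r; auto.
      apply Rmult_le_pos; left; apply Rinv_0_lt_compat; auto.
    - rewrite Sm_scal. apply Rmult_le_compat_l. left; apply Rpower_pos.
      eapply Rle_trans. apply zeta; auto. unfold s. assert (/ (2 / INR k) = INR k / 2) by (field; lra). lra. }
  assert (0 <= divsum N 0) by (pose proof (divsum_ge1 N 0 HN); lra).
  eapply Rle_trans. apply pow_incr. split; eauto.
  rewrite Rpow_mult_distr. rewrite Rmult_comm. apply Rmult_le_compat_l.
  apply pow_le. pose proof (pos_INR k). lra.
  rewrite <- Rpower_pow by apply Rpower_pos. rewrite Rpower_mult.
  unfold s. replace (2 / INR k * INR k) with (INR 2) by (simpl; field; lra).
  rewrite Rpower_pow by auto. lra. Qed.

Lemma part2 : forall k : nat, (2 <= k)%nat ->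
     exists Ck : R, (0 < Ck)%R /\
       forall N : Z, (2 <= N)%Z ->
         (INR (Ik k N) <= Ck * IZR N ^ (2 * k + 2))%R.
Proof. intros k Hk. exists (64 ^ k * (2 * alpha k + (1 + INR k / 2) ^ k)). split.
  { apply Rmult_lt_0_compat. apply pow_lt; lra. pose proof (alpha_pos k).
    assert (0 < (1 + INR k / 2) ^ k) by (apply pow_lt; pose proof (pos_INR k); lra). lra. }
  intros N HN.
  assert (HN2 : 2 <= IZR N) by (apply IZR_le; lia).
  unfold Ik. rewrite Sm_nat.
  eapply Rle_trans.
  { apply Sm_le with (g := fun h => (64 * IZR N ^ 2) ^ k * ((if (h mod 1 =? 0)%Z then 1 else 0) * divsum N h ^ k)).
    intros h _. rewrite pow_INR, Z.mod_1_r. simpl (0 =? 0)%Z. rewrite Rmult_1_l, <- Rpow_mult_distr.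
    apply pow_incr. split. apply pos_INR. apply rN_univ; auto. }
  rewrite Sm_scal. fold (T N k 1).
  pose proof (T_bound N ltac:(lia) k 1%Z ltac:(lia)) as HT.
  assert (E1 : Rpower (IZR 1) (ee k) = 1) by (unfold Rpower; rewrite ln_1, Rmult_0_r, exp_0; auto).
  rewrite E1 in HT. pose proof (H_pow N k ltac:(lia) ltac:(lia)) as HP.
  assert (HX : IZR (2 * N * N) = 2 * IZR N ^ 2) by (rewrite !mult_IZR; simpl; ring).
  rewrite HX in HT.
  assert (Hpos : 0 <= (64 * IZR N ^ 2) ^ k) by (apply pow_le; nra).
  eapply Rle_trans. apply Rmult_le_compat_l. exact Hpos. eapply Rle_trans. exact HT.
  apply Rplus_le_compat_l. exact HP.
  rewrite pow_add, pow_mult, Rpow_mult_distr. unfold Rdiv. rewrite Rinv_1. simpl (IZR N ^ 2 * 1)%R. 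
  right. ring. Qed.

Close Scope R_scope.

Theorem lemma1p5 :
  (exists C : R, (0 < C)%R /\
     forall N : Z, (2 <= N)%Z ->
       (forall h : Z, (0 < Z.abs h <= 2 * N ^ 2)%Z ->
          (INR (rN N h) <= C * IZR N ^ 2 * divsum N h)%R) /\
       (INR (rN N 0) <= C * IZR N ^ 2 * ln (IZR N))%R) /\
  (forall k : nat, (2 <= k)%nat ->
     exists Ck : R, (0 < Ck)%R /\
       forall N : Z, (2 <= N)%Z ->
         (INR (Ik k N) <= Ck * IZR N ^ (2 * k + 2))%R).
Proof. split. exact part1. exact part2. Qed.
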